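(* A finite-dimensional algebra $\Lambda$ is ext-irreducible if and only if $\Lambda$ is mono-irreducible.
   Context: $\Bbbk$ is algebraically closed. Let $\Lambda=\Bbbk Q/I$ be the path algebra of a bound quiver (for an arbitrary finite-dimensional algebra the notions are taken for a Morita-equivalent bound quiver algebra). For a dimension vector $\mathbf d\in\mathbb N^{Q_0}$, $\mathrm{rep}_\Lambda(\mathbf d)$ is the affine variety of representations $V=(V_\alpha)_{\alpha\in Q_1}$, $V_\alpha\in M_{d_{t\alpha}\times d_{s\alpha}}(\Bbbk)$, satisfying the relations in $I$. Mono-irreducibility: for dimension vectors $\mathbf e\le\mathbf d$ (componentwise), $\mathcal M_\Lambda(\mathbf e,\mathbf d)$ is the variety of triples $(V,W,f)$ with $V\in\mathrm{rep}_\Lambda(\mathbf e)$, $W\in\mathrm{rep}_\Lambda(\mathbf d)$, $f=(f_x)$, $f_x\in M_{d_x\times e_x}(\Bbbk)$, an injective homomorphism $V\to W$ (i.e. $W_\alpha f_{s\alpha}=f_{t\alpha}V_\alpha$ for all $\alpha$ and each $f_x$ injective); $\Lambda$ is mono-irreducible if all $\mathcal M_\Lambda(\mathbf e,\mathbf d)$, $\mathbf e\le\mathbf d$, are irreducible. Ext-irreducibility: for $V\in\mathrm{rep}_\Lambda(\mathbf d)$, $U\in\mathrm{rep}_\Lambda(\mathbf e)$ and $Z=(Z_\alpha)_{\alpha\in Q_1}$ with $Z_\alpha\in M_{d_{t\alpha}\times e_{s\alpha}}(\Bbbk)$, let $W^{V,Z,U}$ be the representation of $Q$ with $W^{V,Z,U}_\alpha=\begin{pmatrix}V_\alpha&Z_\alpha\\0&U_\alpha\end{pmatrix}$;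 let $\mathbb Z^{U,V}$ be the set of $Z$ such that $W^{V,Z,U}$ satisfies the relations of $I$. $\mathcal E_\Lambda(\mathbf e,\mathbf d)$ is the affine variety of triples $(U,V,Z)$ with $U\in\mathrm{rep}_\Lambda(\mathbf e)$, $V\in\mathrm{rep}_\Lambda(\mathbf d)$, $Z\in\mathbb Z^{U,V}$; $\Lambda$ is ext-irreducible if $\mathcal E_\Lambda(\mathbf e,\mathbf d)$ is irreducible for all dimension vectors $\mathbf d,\mathbf e$. *)

(* Defs.v *)
From HB Require Import structures.
From mathcomp Require Import all_boot all_order all_algebra.
Set Implicit Arguments. Unset Strict Implicit. Unset Printing Implicit Defensive.
Import GRing.Theory.
Local Open Scope ring_scope.

Section Zariski.
Variable k : fieldType.
Variable J : finType.

Inductive polyfn : ((J -> k) -> k) -> Prop :=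
| pf_const (c : k) : polyfn (fun _ => c)
| pf_coord (j : J) : polyfn (fun v => v j)
| pf_add f g : polyfn f -> polyfn g -> polyfn (fun v => f v + g v)
| pf_mul f g : polyfn f -> polyfn g -> polyfn (fun v => f v * g v).

Definition zariski_closed (Z : (J -> k) -> Prop) : Prop :=
  exists S : ((J -> k) -> k) -> Prop,
    (forall f, S f -> polyfn f) /\ (forall v, Z v <-> (forall f, S f -> f v = 0)).

Definition irreducible (X : (J -> k) -> Prop) : Prop :=
  (exists v, X v) /\
  forall Z1 Z2, zariski_closed Z1 -> zariski_closed Z2 ->
    (forall v, X v -> Z1 v \/ Z2 v) ->
    (forall v, X v -> Z1 v) \/ (forall v, X v -> Z2 v).
End Zariski.

(* matrix-entry coordinates of a family of matrices indexed by I *)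
Definition midx (I : finType) (r c : I -> nat) : finType :=
  {i : I & ('I_(r i) * 'I_(c i))%type}.

Definition mxof (k : Type) (I : finType) (r c : I -> nat) (v : midx r c -> k)
  : forall i : I, 'M[k]_(r i, c i) :=
  fun i => \matrix_(p < r i, q < c i)
             v (existT (fun i => ('I_(r i) * 'I_(c i))%type) i (p, q)).

Section Quiver.
Variable k : fieldType.
Variables (Q0 Q1 : finType) (src tgt : Q1 -> Q0).

(* a path: starting vertex x and arrows a1, a2, ..., an (a1 applied first) *)
Definition path := (Q0 * seq Q1)%type.

Fixpoint pend (x : Q0) (p : seq Q1) : option Q0 :=
  match p with
  | [::] => Some x
  | a :: p' => if src a == x then pend (tgt a) p' else None
  end.

Definition valid_path (p : path) : bool := pend p.1 p.2 != None.

(* elements of the path algebra kQ as formal linear combinations of paths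
   (non-valid "paths" represent 0) *)
Definition kQ := seq (k * path).

Definition coef (f : kQ) (p : path) : k := \sum_(cp <- f | cp.2 == p) cp.1.

Definition kQ_eq (f g : kQ) : Prop :=
  forall p : path, valid_path p -> coef f p = coef g p.

Definition kQ_mul (f g : kQ) : kQ :=
  flatten [seq [seq (cp.1 * cq.1, (cp.2.1, cp.2.2 ++ cq.2.2))
               | cq <- g & pend cp.2.1 cp.2.2 == Some cq.2.1] | cp <- f].

Definition in_ideal (G : seq kQ) (f : kQ) : Prop :=
  exists s : seq (kQ * nat * kQ),
    kQ_eq f (flatten [seq kQ_mul (kQ_mul t.1.1 (nth [::] G t.1.2)) t.2 | t <- s]).

(* the ideal I = <G> is admissible: R^m <= I <= R^2 (R = arrow ideal) *)
Definition admissible (G : seq kQ) : Prop :=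
  (forall r, r \in G -> forall cp, cp \in r -> (2 <= size cp.2.2)%N) /\
  exists m : nat, forall p : path, valid_path p -> size p.2 = m ->
    in_ideal G [:: (1, p)].

Definition Rep (d : Q0 -> nat) := forall a : Q1, 'M[k]_(d (tgt a), d (src a)).

(* evalp V x p y = V_p if p is a path from x to y, and 0 otherwise *)
Fixpoint evalp (d : Q0 -> nat) (V : Rep d) (x : Q0) (p : seq Q1) (y : Q0)
  {struct p} : 'M[k]_(d y, d x) :=
  match p with
  | [::] => if x == y then conform_mx 0 (1%:M : 'M[k]_(d x)) else 0
  | a :: p' => evalp V (tgt a) p' y *m
               (if src a == x then conform_mx 0 (V a) else 0)
  end.

Definition sat_rel (d : Q0 -> nat) (V : Rep d) (r : kQ) : Prop :=
  forall x y : Q0,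
    \sum_(cp <- r) cp.1 *: (if cp.2.1 == x then evalp V x cp.2.2 y else 0) = 0.

Definition satisfies (G : seq kQ) (d : Q0 -> nat) (V : Rep d) : Prop :=
  forall r, r \in G -> sat_rel V r.

Definition repidx (d : Q0 -> nat) := midx (fun a => d (tgt a)) (fun a => d (src a)).

Definition Eidx (e d : Q0 -> nat) : finType :=
  (repidx e + repidx d + midx (fun a => d (tgt a)) (fun a => e (src a)))%type.

Definition Evar (G : seq kQ) (e d : Q0 -> nat) (v : Eidx e d -> k) : Prop :=
  let U : Rep e := mxof (fun j => v (inl (inl j))) in
  let V : Rep d := mxof (fun j => v (inl (inr j))) in
  let Z := mxof (fun j => v (inr j)) in
  let W : Rep (fun x => d x + e x)%N := fun a => block_mx (V a) (Z a) 0 (U a) in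
  satisfies G U /\ satisfies G V /\ satisfies G W.

Definition ext_irreducible (G : seq kQ) : Prop :=
  forall e d : Q0 -> nat, irreducible (Evar G (e:=e) (d:=d)).

Definition Midx (e d : Q0 -> nat) : finType :=
  (repidx e + repidx d + midx d e)%type.

Definition Mvar (G : seq kQ) (e d : Q0 -> nat) (v : Midx e d -> k) : Prop :=
  let V : Rep e := mxof (fun j => v (inl (inl j))) in
  let W : Rep d := mxof (fun j => v (inl (inr j))) in
  let f : forall x : Q0, 'M[k]_(d x, e x) := mxof (fun j => v (inr j)) in
  satisfies G V /\ satisfies G W /\
  (forall a : Q1, W a *m f (src a) = f (tgt a) *m V a) /\
  (forall x : Q0, injective (fun u : 'cV[k]_(e x) => f x *m u)).

Definition mono_irreducible (G : seq kQ) : Prop :=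
  forall e d : Q0 -> nat, (forall x, e x <= d x)%N -> irreducible (Mvar G (e:=e) (d:=d)).

End Quiver.

(* Main.v *)
Require Import Defs.
From HB Require Import structures.
From mathcomp Require Import all_boot all_order all_algebra.
From Stdlib Require Import Classical FunctionalExtensionality ClassicalEpsilon.
From mathcomp Require Import ring.
Set Implicit Arguments. Unset Strict Implicit. Unset Printing Implicit Defensive.
Import GRing.Theory.
Local Open Scope ring_scope.


Section Top.
Variable k : fieldType.
Notation pf J := (@polyfn k J).
Notation pfc := (@pf_const k _).
Notation pfx := (@pf_coord k _).

Lemma polyfn_ext (J : finType) f : pf J f ->
  forall v w, (forall j, v j = w j) -> f v = f w.
Proof. by elim=> //= [g h _ IH1 _ IH2|g h _ IH1 _ IH2] v w H; rewrite (IH1 v w H) (IH2 v w H). Qed.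

Lemma pf_eq (J : finType) f g : pf J f -> (forall v, f v = g v) -> pf J g.
Proof. by move=> Hf E; rewrite -(functional_extensionality _ _ E). Qed.

Lemma pf_sum (J : finType) (I : Type) (r : seq I) (P : pred I)
  (F : I -> (J -> k) -> k) : (forall i, pf J (F i)) ->
  pf J (fun v => \sum_(i <- r | P i) F i v).
Proof.
move=> H; elim: r => [|i r IH].
  by apply: (pf_eq (pfc 0)) => v; rewrite big_nil.
case: (boolP (P i)) => Pi.
  by apply: (pf_eq (pf_add (H i) IH)) => v; rewrite big_cons Pi.
by apply: (pf_eq IH) => v; rewrite big_cons (negbTE Pi).
Qed.

Lemma pf_prod (J : finType) (I : Type) (r : seq I) (P : pred I)
  (F : I -> (J -> k) -> k) : (forall i, pf J (F i)) ->
  pf J (fun v => \prod_(i <- r | P i) F i v).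
Proof.
move=> H; elim: r => [|i r IH].
  by apply: (pf_eq (pfc 1)) => v; rewrite big_nil.
case: (boolP (P i)) => Pi.
  by apply: (pf_eq (pf_mul (H i) IH)) => v; rewrite big_cons Pi.
by apply: (pf_eq IH) => v; rewrite big_cons (negbTE Pi).
Qed.

Lemma pf_opp (J : finType) f : pf J f -> pf J (fun v => - f v).
Proof. by move=> H; apply: (pf_eq (pf_mul (pfc (-1)) H)) => v; rewrite mulN1r. Qed.

Lemma pf_comp (J1 J2 : finType) (phi : (J1 -> k) -> (J2 -> k)) P :
  (forall j, pf J1 (fun v => phi v j)) -> pf J2 P -> pf J1 (fun v => P (phi v)).
Proof.
move=> Hphi; elim=> [c|j|f g _ H1 _ H2|f g _ H1 _ H2] /=.
- exact: pfc.
- exact: Hphi.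
- exact: pf_add.
- exact: pf_mul.
Qed.

Definition zc (J : finType) := @zariski_closed k J.

Lemma zc_ext (J : finType) (Z : (J -> k) -> Prop) : zc Z ->
  forall v w, (forall j, v j = w j) -> Z v -> Z w.
Proof.
case=> S [HS HZ] v w E /HZ Hv; apply/HZ => f Sf.
by rewrite -(polyfn_ext (HS f Sf) E); apply: Hv.
Qed.

Lemma zc_union (J : finType) (Z1 Z2 : (J -> k) -> Prop) : zc Z1 -> zc Z2 ->
  zc (fun v => Z1 v \/ Z2 v).
Proof.
case=> S1 [HS1 HZ1] [S2 [HS2 HZ2]].
exists (fun h => exists f g, S1 f /\ S2 g /\ h = (fun v => f v * g v)); split.
  by move=> h [f [g [Sf [Sg ->]]]]; apply: pf_mul; [apply: HS1|apply: HS2].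
move=> v; split.
  case=> [/HZ1 H|/HZ2 H] h [f [g [Sf [Sg ->]]]]; first by rewrite (H f Sf) mul0r.
  by rewrite (H g Sg) mulr0.
move=> H; case: (classic (Z1 v)) => [|N1]; [by left|right].
apply/HZ2 => g Sg.
have [f [Sf nf]] : exists f, S1 f /\ f v <> 0.
  apply: NNPP => N; apply: N1; apply/HZ1 => f Sf.
  by apply: NNPP => nf; apply: N; exists f.
have := H _ (ex_intro _ f (ex_intro _ g (conj Sf (conj Sg erefl)))).
by move/eqP; rewrite mulf_eq0 => /orP [/eqP//|/eqP].
Qed.

Lemma zc_zero (J : finType) h : pf J h -> zc (fun v => h v = 0).
Proof.
move=> Hh; exists (fun f => f = h); split; first by move=> f ->.
by move=> v; split; [move=> H f -> | apply].
Qed.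

Definition irr (J : finType) := @irreducible k J.

Lemma irr_open (J : finType) (X : (J -> k) -> Prop) h : irr X -> pf J h ->
  (exists v, X v /\ h v <> 0) -> irr (fun v => X v /\ h v <> 0).
Proof.
move=> [_ HX] Hh Hne; split => // Z1 Z2 C1 C2 Hcov.
have := HX (fun v => Z1 v \/ h v = 0) Z2 (zc_union C1 (zc_zero Hh)) C2.
case.
- move=> v Xv; case: (classic (h v = 0)) => H; first by left; right.
  by case: (Hcov v (conj Xv H)); [left; left|right].
- by move=> H; left => v [Xv nh]; case: (H v Xv).
- by move=> H; right => v [Xv _]; apply: H.
Qed.

Definition zcont (J1 J2 : finType) (X : (J1 -> k) -> Prop) (phi : (J1 -> k) -> (J2 -> k)) :=
  forall P, pf J2 P -> exists P', pf J1 P' /\ forall x, X x -> (P (phi x) = 0 <-> P' x = 0).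

Lemma irr_image (J1 J2 : finType) (X : (J1 -> k) -> Prop) (Y : (J2 -> k) -> Prop) phi :
  irr X -> zcont X phi -> (forall x, X x -> Y (phi x)) ->
  (forall y, Y y -> exists x, X x /\ forall j, phi x j = y j) -> irr Y.
Proof.
move=> [[x0 X0] HX] Hc HXY HYX; split; first by exists (phi x0); apply: HXY.
have pre : forall Z, zc Z -> exists Z', zc Z' /\ forall x, X x -> (Z (phi x) <-> Z' x).
  move=> Z [S [HS HZ]].
  exists (fun x => forall P', (pf J1 P' /\ exists P, S P /\ forall x, X x -> (P (phi x) = 0 <-> P' x = 0)) -> P' x = 0).
  split.
    exists (fun P' => pf J1 P' /\ exists P, S P /\ forall x, X x -> (P (phi x) = 0 <-> P' x = 0)).
    by split => [P' []|].
  move=> x Xx; split.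
    move=> /HZ H P' [_ [P [SP HP]]]; apply/(HP x Xx); exact: H.
  move=> H; apply/HZ => P SP.
  have [P' [HP' E]] := Hc P (HS P SP).
  by apply/(E x Xx); apply: H; split => //; exists P.
move=> Z1 Z2 C1 C2 Hcov.
have [Z1' [C1' E1]] := pre _ C1; have [Z2' [C2' E2]] := pre _ C2.
have := HX Z1' Z2' C1' C2'; case.
- move=> x Xx; case: (Hcov _ (HXY x Xx)) => H; [left; apply/E1|right; apply/E2] => //.
- move=> H; left => y /HYX [x [Xx Exy]].
  by apply: (zc_ext C1 Exy); apply/E1 => //; apply: H.
- move=> H; right => y /HYX [x [Xx Exy]].
  by apply: (zc_ext C2 Exy); apply/E2 => //; apply: H.
Qed.

Lemma zcont_frac (J1 J2 : finType) (X : (J1 -> k) -> Prop) (phi : (J1 -> k) -> (J2 -> k)) :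
  (forall j, exists a h, pf J1 a /\ pf J1 h /\ forall x, X x -> h x <> 0 /\ phi x j * h x = a x) ->
  zcont X phi.
Proof.
move=> Hj.
suff H : forall P, pf J2 P -> exists D P', pf J1 D /\ pf J1 P' /\
   forall x, X x -> D x <> 0 /\ D x * P (phi x) = P' x.
  move=> P /H [D [P' [_ [HP' E]]]]; exists P'; split => // x /E [nD <-].
  by split => [->|/eqP]; [rewrite mulr0|rewrite mulf_eq0 (negbTE (introN eqP nD)) => /eqP].
move=> P; elim=> [c|j|f g _ [D1 [P1 [H1 [H1' E1]]]] _ [D2 [P2 [H2 [H2' E2]]]]|f g _ [D1 [P1 [H1 [H1' E1]]]] _ [D2 [P2 [H2 [H2' E2]]]]].
- exists (fun _ => 1), (fun _ => c); split; first exact: pfc.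
  split; first exact: pfc.
  by move=> x _; rewrite mul1r; split => //; apply/eqP; exact: oner_neq0.
- have [a [h [Ha [Hh E]]]] := Hj j.
  exists h, a; split => //; split => //.
  by move=> x /E [nh <-]; split => //; rewrite mulrC.
- exists (fun x => D1 x * D2 x), (fun x => P1 x * D2 x + P2 x * D1 x).
  split; first exact: pf_mul.
  split; first by apply: pf_add; apply: pf_mul.
  move=> x Xx; have [n1 <-] := E1 x Xx; have [n2 <-] := E2 x Xx.
  split; first by apply/eqP; rewrite mulf_neq0 //; apply/eqP.
  by ring.
- exists (fun x => D1 x * D2 x), (fun x => P1 x * P2 x).
  split; first exact: pf_mul.
  split; first exact: pf_mul.
  move=> x Xx; have [n1 <-] := E1 x Xx; have [n2 <-] := E2 x Xx.
  split; first by apply/eqP; rewrite mulf_neq0 //; apply/eqP.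
  by ring.
Qed.

Definition join (A B : finType) (x : A -> k) (y : B -> k) : (A + B)%type -> k :=
  fun j => match j with inl a => x a | inr b => y b end.

Lemma irr_prod (A B : finType) (X : (A -> k) -> Prop) (Y : (B -> k) -> Prop) :
  irr X -> irr Y -> irr (fun v : (A + B)%type -> k => X (fun a => v (inl a)) /\ Y (fun b => v (inr b))).
Proof.
move=> [[x0 X0] HX] [[y0 Y0] HY]; split; first by exists (join x0 y0).
move=> Z1 Z2 C1 C2 Hcov.
have slice : forall Z : ((A + B)%type -> k) -> Prop, zc Z -> forall x : A -> k, zc (fun y : B -> k => Z (join x y)).
  move=> Z [S [HS HZ]] x; exists (fun Q => exists P, S P /\ Q = fun y => P (join x y)).
  split.
    move=> Q [P [SP ->]]; apply: (pf_comp (phi := fun y => join x y)) (HS P SP).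
    by case=> [a|b] /=; [exact: pfc|exact: pfx].
  move=> y; split; first by move=> /HZ H Q [P [SP ->]]; apply: H.
  by move=> H; apply/HZ => P SP; exact: (H (fun y => P (join x y)) (ex_intro _ P (conj SP erefl))).
have big : forall Z : ((A + B)%type -> k) -> Prop, zc Z -> zc (fun x : A -> k => forall y, Y y -> Z (join x y)).
  move=> Z [S [HS HZ]]; exists (fun Q => exists P y, S P /\ Y y /\ Q = fun x => P (join x y)).
  split.
    move=> Q [P [y [SP [Yy ->]]]]; apply: (pf_comp (phi := fun x => join x y)) (HS P SP).
    by case=> [a|b] /=; [exact: pfx|exact: pfc].
  move=> x; split.
    by move=> H Q [P [y [SP [Yy ->]]]]; move/HZ: (H y Yy); apply.
  by move=> H y Yy; apply/HZ => P SP; exact: (H (fun x => P (join x y)) (ex_intro _ P (ex_intro _ y (conj SP (conj Yy erefl))))).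
have := HX _ _ (big _ C1) (big _ C2); case.
- move=> x Xx; apply: (HY _ _ (slice _ C1 x) (slice _ C2 x)).
  by move=> y Yy; apply: Hcov.
- move=> H; left => v [Xv Yv]; apply: (zc_ext C1 (v := join (fun a => v (inl a)) (fun b => v (inr b)))).
    by case.
  exact: H.
- move=> H; right => v [Xv Yv]; apply: (zc_ext C2 (v := join (fun a => v (inl a)) (fun b => v (inr b)))).
    by case.
  exact: H.
Qed.
End Top.

Section Aff.
Variable k : closedFieldType.
Notation pf J := (@polyfn k J).
Notation pfc := (@pf_const k _).
Notation pfx := (@pf_coord k _).



Lemma fresh (s : seq k) : exists x, x \notin s.
Proof.
have /closed_rootP [x rx] : size (\prod_(a <- s) ('X - a%:P) - 1) != 1%N.
  case: s => [|a s]; first by rewrite big_nil subrr size_poly0.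
  have sP := size_prod_XsubC (a :: s) (fun x => x); simpl in sP.
  by rewrite size_polyDl sP // size_polyN size_poly1.
exists x; apply/negP => xs.
move: rx; rewrite /root hornerD hornerN hornerC.
have : root (\prod_(a <- s) ('X - a%:P)) x by rewrite root_prod_XsubC.
by move/rootP ->; rewrite sub0r oppr_eq0 oner_eq0.
Qed.

Lemma many (n : nat) : exists s : seq k, uniq s /\ size s = n.
Proof.
elim: n => [|n [s [us ss]]]; first by exists [::].
have [x xs] := fresh s; exists (x :: s); by rewrite /= xs us ss.
Qed.

Lemma poly_all0 (p : {poly k}) : (forall t, p.[t] = 0) -> p = 0.
Proof.
move=> H; have [s [us ss]] := many (size p).
apply: (roots_geq_poly_eq0 (rs := s)) => //; last by rewrite ss.
by apply/allP => t _; apply/rootP.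
Qed.

Lemma line_poly (J : finType) f : pf J f -> forall v w : J -> k,
  exists p : {poly k}, forall t, f (fun j => v j + t * (w j - v j)) = p.[t].
Proof.
move=> Hf v w; elim: Hf => [c|j|g h _ [p Hp] _ [q Hq]|g h _ [p Hp] _ [q Hq]].
- by exists c%:P => t; rewrite hornerC.
- exists ((v j)%:P + 'X * (w j - v j)%:P) => t.
  by rewrite hornerD hornerC hornerM hornerX hornerC.
- by exists (p + q) => t; rewrite hornerD Hp Hq.
- by exists (p * q) => t; rewrite hornerM Hp Hq.
Qed.

Lemma irr_full (J : finType) : irreducible (fun _ : J -> k => True).
Proof.
split; first by exists (fun _ => 0).
move=> Z1 Z2 [S1 [HS1 HZ1]] [S2 [HS2 HZ2]] Hcov.
case: (classic (forall v, Z1 v)) => [H|N1]; [by left|right].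
have [v nv] : exists v, ~ Z1 v by apply: NNPP => N; apply: N1 => v; apply: NNPP => nv; apply: N; exists v.
have [f1 [Sf1 nf1]] : exists f, S1 f /\ f v <> 0.
  apply: NNPP => N; apply: nv; apply/HZ1 => f Sf.
  by apply: NNPP => nf; apply: N; exists f.
move=> w _; apply/HZ2 => f2 Sf2.
have [p Hp] := line_poly (HS1 _ Sf1) v w.
have [q Hq] := line_poly (HS2 _ Sf2) v w.
have pq0 : p * q = 0.
  apply: poly_all0 => t; rewrite hornerM -Hp -Hq.
  set u := (fun j => _).
  case: (Hcov u I) => [/HZ1 H|/HZ2 H]; first by rewrite (H _ Sf1) mul0r.
  by rewrite (H _ Sf2) mulr0.
have p0 : p != 0.
  apply/negP => /eqP p0; apply: nf1; move: (Hp 0); rewrite p0 horner0 => <-.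
  by apply: (polyfn_ext (HS1 _ Sf1)) => j; rewrite mul0r addr0.
move/eqP: pq0; rewrite mulf_eq0 (negbTE p0) /= => /eqP q0.
move: (Hq 1); rewrite q0 horner0 => <-.
by apply: (polyfn_ext (HS2 _ Sf2)) => j; rewrite mul1r addrC subrK.
Qed.
End Aff.

Section PMX.
Variable k : fieldType.
Variable J : finType.
Notation pf := (@polyfn k J).
Notation pfc := (@pf_const k J).
Notation pfx := (@pf_coord k J).

Definition pmx m n (F : (J -> k) -> 'M[k]_(m, n)) := forall i j, pf (fun v => F v i j).

Lemma pmx_const m n (A : 'M[k]_(m, n)) : pmx (fun _ => A).
Proof. by move=> i j; exact: pfc. Qed.

Lemma pmx_add m n (F G : (J -> k) -> 'M[k]_(m, n)) : pmx F -> pmx G -> pmx (fun v => F v + G v).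
Proof. by move=> HF HG i j; apply: (pf_eq (pf_add (HF i j) (HG i j))) => v; rewrite mxE. Qed.

Lemma pmx_opp m n (F : (J -> k) -> 'M[k]_(m, n)) : pmx F -> pmx (fun v => - F v).
Proof.
move=> HF i j; apply: (pf_eq (pf_mul (pfc (-1)) (HF i j))) => v.
by rewrite mxE mulN1r.
Qed.

Lemma pmx_scale m n c (F : (J -> k) -> 'M[k]_(m, n)) : pf c -> pmx F -> pmx (fun v => c v *: F v).
Proof. by move=> Hc HF i j; apply: (pf_eq (pf_mul Hc (HF i j))) => v; rewrite mxE. Qed.

Lemma pmx_mul m n p (F : (J -> k) -> 'M[k]_(m, n)) (G : (J -> k) -> 'M[k]_(n, p)) :
  pmx F -> pmx G -> pmx (fun v => F v *m G v).
Proof.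
move=> HF HG i j; apply: (pf_eq (pf_sum (index_enum 'I_n) predT (F := fun l v => F v i l * G v l j) _)).
  by move=> l; apply: pf_mul.
by move=> v; rewrite mxE.
Qed.

Lemma pmx_cast m n m' n' (e : (m = m') * (n = n')) (F : (J -> k) -> 'M[k]_(m, n)) :
  pmx F -> pmx (fun v => castmx e (F v)).
Proof. by move=> HF i j; apply: (pf_eq (HF _ _)) => v; rewrite castmxE. Qed.

Lemma pmx_row m n1 n2 (F : (J -> k) -> 'M[k]_(m, n1)) (G : (J -> k) -> 'M[k]_(m, n2)) :
  pmx F -> pmx G -> pmx (fun v => row_mx (F v) (G v)).
Proof.
move=> HF HG i j; rewrite -[j]splitK; case: split => l /=.
  by apply: (pf_eq (HF i l)) => v; rewrite row_mxEl.
by apply: (pf_eq (HG i l)) => v; rewrite row_mxEr.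
Qed.

Lemma pmx_col m1 m2 n (F : (J -> k) -> 'M[k]_(m1, n)) (G : (J -> k) -> 'M[k]_(m2, n)) :
  pmx F -> pmx G -> pmx (fun v => col_mx (F v) (G v)).
Proof.
move=> HF HG i j; rewrite -[i]splitK; case: split => l /=.
  by apply: (pf_eq (HF l j)) => v; rewrite col_mxEu.
by apply: (pf_eq (HG l j)) => v; rewrite col_mxEd.
Qed.

Lemma pmx_block m1 m2 n1 n2 (A : (J -> k) -> 'M[k]_(m1, n1)) (B : (J -> k) -> 'M[k]_(m1, n2))
  (C : (J -> k) -> 'M[k]_(m2, n1)) (D : (J -> k) -> 'M[k]_(m2, n2)) :
  pmx A -> pmx B -> pmx C -> pmx D -> pmx (fun v => block_mx (A v) (B v) (C v) (D v)).
Proof. by move=> *; apply: pmx_col; apply: pmx_row. Qed.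

Lemma pmx_usub m1 m2 n (F : (J -> k) -> 'M[k]_(m1 + m2, n)) : pmx F -> pmx (fun v => usubmx (F v)).
Proof. by move=> HF i j; apply: (pf_eq (HF _ j)) => v; rewrite mxE. Qed.
Lemma pmx_dsub m1 m2 n (F : (J -> k) -> 'M[k]_(m1 + m2, n)) : pmx F -> pmx (fun v => dsubmx (F v)).
Proof. by move=> HF i j; apply: (pf_eq (HF _ j)) => v; rewrite mxE. Qed.
Lemma pmx_lsub m n1 n2 (F : (J -> k) -> 'M[k]_(m, n1 + n2)) : pmx F -> pmx (fun v => lsubmx (F v)).
Proof. by move=> HF i j; apply: (pf_eq (HF i _)) => v; rewrite mxE. Qed.
Lemma pmx_rsub m n1 n2 (F : (J -> k) -> 'M[k]_(m, n1 + n2)) : pmx F -> pmx (fun v => rsubmx (F v)).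
Proof. by move=> HF i j; apply: (pf_eq (HF i _)) => v; rewrite mxE. Qed.

Lemma pf_det n (F : (J -> k) -> 'M[k]_n) : pmx F -> pf (fun v => \det (F v)).
Proof.
move=> HF; apply: pf_sum => s; apply: pf_mul; first exact: pfc.
by apply: pf_prod => i; apply: HF.
Qed.

Lemma pmx_adj n (F : (J -> k) -> 'M[k]_n) : pmx F -> pmx (fun v => \adj (F v)).
Proof.
move=> HF i j; apply: (pf_eq (pf_mul (pfc ((-1) ^+ (j + i))) (pf_det (F := fun v => row' j (col' i (F v))) _))).
  by move=> a b; apply: (pf_eq (HF _ _)) => v; rewrite !mxE.
by move=> v; rewrite mxE.
Qed.
End PMX.

Section QA.
Variable k : fieldType.
Variables (Q0 Q1 : finType) (src tgt : Q1 -> Q0).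
Notation Rep := (Rep k src tgt).

Lemma evalp_morph (d1 d2 : Q0 -> nat) (V1 : Rep d1) (V2 : Rep d2)
  (T : forall x, 'M[k]_(d2 x, d1 x)) :
  (forall a, V2 a *m T (src a) = T (tgt a) *m V1 a) ->
  forall p x y, evalp V2 x p y *m T x = T y *m evalp V1 x p y.
Proof.
move=> HT; elim=> [|a p IH] x y /=.
  case: eqP => [<-|_]; last by rewrite mul0mx mulmx0.
  by rewrite !conform_mx_id mul1mx mulmx1.
case: eqP => [Ex|_]; last by rewrite !mulmx0 mul0mx.
subst x; rewrite !conform_mx_id -mulmxA HT mulmxA IH mulmxA.
done.
Qed.

Lemma sat_morph (d1 d2 : Q0 -> nat) (V1 : Rep d1) (V2 : Rep d2)
  (T : forall x, 'M[k]_(d2 x, d1 x)) :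
  (forall a, V2 a *m T (src a) = T (tgt a) *m V1 a) ->
  (forall x, exists S : 'M[k]_(d1 x, d2 x), T x *m S = 1%:M) ->
  forall G, satisfies G V1 -> satisfies G V2.
Proof.
move=> HT Hinv G H1 r rG x y; have [S TS] := Hinv x.
have := H1 r rG x y.
move=> E1; rewrite -[LHS]mulmx1 -TS mulmxA mulmx_suml.
rewrite (eq_bigr (fun cp => T y *m (cp.1 *: (if cp.2.1 == x then evalp V1 x cp.2.2 y else 0)))).
  by rewrite -mulmx_sumr E1 mulmx0 mul0mx.
move=> cp _; rewrite -scalemxAl -scalemxAr; congr (_ *: _).
by case: eqP => _; [exact: evalp_morph | rewrite mul0mx mulmx0].
Qed.

Lemma sat_ext (d : Q0 -> nat) (V1 V2 : Rep d) : (forall a, V1 a = V2 a) ->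
  forall G, satisfies G V1 -> satisfies G V2.
Proof.
move=> E; apply: (sat_morph (T := fun x => 1%:M)).
  by move=> a; rewrite mulmx1 mul1mx E.
by move=> x; exists 1%:M; rewrite mulmx1.
Qed.

Lemma sat_zero (d : Q0 -> nat) (G : seq (kQ k Q0 Q1)) :
  (forall r, r \in G -> forall cp, cp \in r -> (2 <= size cp.2.2)%N) ->
  satisfies G (fun a => 0 : 'M[k]_(d (tgt a), d (src a))).
Proof.
move=> HG r rG x y; rewrite big_seq big1 // => cp cpr.
have := HG r rG cp cpr; case: cp.2.2 => [|a p] //= _.
case: eqP => _; rewrite ?scaler0 //; case: eqP => [Ea|_]; last by rewrite mulmx0 scaler0.
by subst x; rewrite conform_mx_id mulmx0 scaler0.
Qed.
End QA.


Section MX.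
Variable k : fieldType.

Lemma block_dec m1 m2 n1 n2 (M : 'M[k]_(m1 + m2, n1 + n2)) (V : 'M[k]_(m1, n1)) :
  M *m col_mx 1%:M 0 = col_mx 1%:M 0 *m V ->
  M = block_mx V (ursubmx M) 0 (drsubmx M).
Proof.
move=> H; have := H; rewrite -{1}[M]submxK mul_block_col mul_col_mx !mulmx1 !mulmx0 !addr0 mul1mx mul0mx.
by case/eq_col_mx => E1 E2; rewrite -{1}[M]submxK E1 E2.
Qed.

Lemma invmx_adj n (g : 'M[k]_n) : g \in unitmx -> invmx g = (\det g)^-1 *: \adj g.
Proof. by move=> u; rewrite /invmx u. Qed.

Lemma ent_frac m n c (X : 'M[k]_(m, n)) i j : c != 0 -> (c^-1 *: X) i j * c = X i j.
Proof. by move=> nc; rewrite mxE mulrC mulrA mulfV // mul1r. Qed.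

Lemma castmx_scale m n m' n' (e : (m = m') * (n = n')) c (A : 'M[k]_(m, n)) :
  castmx e (c *: A) = c *: castmx e A.
Proof. by apply/matrixP => i j; rewrite castmxE !mxE castmxE. Qed.

Lemma cast_mul1 n1 n2 n (H : (n1 + n2)%N = n) m p (g : 'M[k]_(m, n)) (h : 'M[k]_(n, p)) :
  castmx (erefl, esym H) g *m castmx (esym H, erefl) h = g *m h.
Proof. by case: n / H g h => g h; rewrite !castmx_id. Qed.

Lemma cast_mul2 n1 n2 n (H : (n1 + n2)%N = n) (g h : 'M[k]_n) :
  g *m h = 1%:M ->
  castmx (esym H, erefl) g *m castmx (erefl, esym H) h = 1%:M.
Proof. by case: n / H g h => g h; rewrite !castmx_id. Qed.

Lemma cast_pid n1 n2 n (H : (n1 + n2)%N = n) (g : 'M[k]_n) :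
  castmx (erefl, esym H) g *m col_mx 1%:M 0 = g *m pid_mx n1.
Proof. by case: n / H g => g; rewrite !castmx_id pid_mx_col. Qed.

Lemma col10_inj m1 m2 n (u1 u2 : 'M[k]_(m1, n)) :
  (col_mx 1%:M 0 : 'M[k]_(m1 + m2, m1)) *m u1 = col_mx 1%:M 0 *m u2 -> u1 = u2.
Proof. by rewrite !mul_col_mx !mul1mx !mul0mx => /eq_col_mx []. Qed.

Lemma complete n m (A : 'M[k]_(n, m)) :
  injective (fun u : 'cV[k]_m => A *m u) ->
  exists g : 'M[k]_n, g \in unitmx /\ g *m pid_mx m = A.
Proof.
move=> Ainj.
have rA : \rank A = m.
  rewrite -mxrank_tr; apply/eqP; rewrite -[_ == _]/(row_free _) -kermx_eq0.
  apply/eqP/row_matrixP => i; rewrite row0.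
  apply: trmx_inj; rewrite trmx0; apply: Ainj => /=.
  by rewrite mulmx0 -{1}[A]trmxK -trmx_mul -row_mul mulmx_ker row0 trmx0.
have le_mn : (m <= n)%N by rewrite -rA rank_leq_row.
have eA := mulmx_ebase A; rewrite rA in eA.
set L := col_ebase A in eA; set R := row_ebase A in eA.
pose P := (pid_mx m : 'M[k]_(n, m)); pose P' := (pid_mx m : 'M[k]_(m, n)).
pose Rb := P *m R *m P' + copid_mx m.
pose Ri := P *m invmx R *m P' + copid_mx m.
have P'P : P' *m P = 1%:M by rewrite mul_pid_mx !minnn (minn_idPr le_mn) pid_mx_1.
have PP'C : P *m P' + copid_mx m = 1%:M.
  by rewrite mul_pid_mx !minnn /copid_mx addrC subrK.
have CP : copid_mx m *m P = 0 by rewrite mul_copid_mx_pid.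
have P'C : P' *m copid_mx m = 0 by rewrite mul_pid_mx_copid.
have CC : copid_mx m *m copid_mx m = copid_mx m :> 'M[k]_n by rewrite copid_mx_id.
have RR : R *m invmx R = 1%:M by rewrite mulmxV ?row_ebase_unit.
have RbRi : Rb *m Ri = 1%:M.
  rewrite /Rb /Ri; move: (copid_mx m) CP P'C PP'C CC => C CP' P'C' PP'C' CC'.
  rewrite mulmxDl !mulmxDr.
  rewrite -!mulmxA P'C' !mulmx0 addr0 (mulmxA P' P) P'P mul1mx (mulmxA C P) CP' mul0mx add0r CC'.
  by rewrite (mulmxA R) RR mul1mx.
exists (L *m Rb); split.
  rewrite unitmx_mul col_ebase_unit /=.
  by case: (mulmx1_unit RbRi).
rewrite -mulmxA /Rb mulmxDl CP addr0 -!mulmxA P'P mulmx1 mulmxA -eA //.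
Qed.
End MX.

Section QB.
Variable k : fieldType.
Variables (Q0 Q1 : finType) (src tgt : Q1 -> Q0).
Notation Rep := (Rep k src tgt).

Lemma sat_dr (d1 d2 : Q0 -> nat) (V : Rep d1) (U : Rep d2)
  (Z : forall a, 'M[k]_(d1 (tgt a), d2 (src a))) G :
  @satisfies k Q0 Q1 src tgt G (fun x => (d1 x + d2 x)%N) (fun a => block_mx (V a) (Z a) 0 (U a)) ->
  satisfies G U.
Proof.
apply: (sat_morph (T := fun x => row_mx 0 1%:M : 'M[k]_(d2 x, d1 x + d2 x))).
  move=> a; rewrite mul_mx_row mulmx0 mulmx1 mul_row_block !mul0mx !mul1mx !add0r.
  done.
move=> x; exists (col_mx 0 1%:M); by rewrite mul_row_col mulmx0 mulmx1 add0r.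
Qed.
End QB.

Lemma pmx_coord (k : fieldType) (J I : finType) (r c : I -> nat) (emb : midx r c -> J) x :
  pmx (fun v : J -> k => mxof (fun j => v (emb j)) x).
Proof. by move=> i j; apply: (pf_eq (@pf_coord k _ (emb (existT _ x (i, j))))) => v; rewrite mxE. Qed.

Lemma mxofE (k : Type) (I : finType) (r c : I -> nat) (v : midx r c -> k) x i j :
  mxof v x i j = v (existT _ x (i, j)).
Proof. by rewrite mxE. Qed.


Section DirA.
Variable k : closedFieldType.
Variables (Q0 Q1 : finType) (src tgt : Q1 -> Q0).
Variable G : seq (kQ k Q0 Q1).
Hypothesis hG : forall r, r \in G -> forall cp, cp \in r -> (2 <= size cp.2.2)%N.
Variables e d : Q0 -> nat.
Local Notation D := (fun x => (d x + e x)%N).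
Local Notation MI := (Midx src tgt d D).
Local Notation EI := (Eidx src tgt e d).

Definition Vm (m : MI -> k) : Rep k src tgt d := mxof (fun j => m (inl (inl j))).
Definition Wm (m : MI -> k) : Rep k src tgt D := mxof (fun j => m (inl (inr j))).
Definition fm (m : MI -> k) x : 'M[k]_(d x + e x, d x) := mxof (fun j => m (inr j)) x.
Definition gm (m : MI -> k) x : 'M[k]_(d x + e x) :=
  block_mx (usubmx (fm m x)) 0 (dsubmx (fm m x)) 1%:M.
Definition hA (m : MI -> k) := \prod_x \det (gm m x).
Definition Wp (m : MI -> k) a : 'M[k]_(d (tgt a) + e (tgt a), d (src a) + e (src a)) :=
  invmx (gm m (tgt a)) *m Wm m a *m gm m (src a).
Definition psi (m : MI -> k) : EI -> k := fun j =>
  match j with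
  | inl (inl j) => drsubmx (Wp m (projT1 j)) (projT2 j).1 (projT2 j).2
  | inl (inr j) => m (inl (inl j))
  | inr j => ursubmx (Wp m (projT1 j)) (projT2 j).1 (projT2 j).2
  end.

Lemma A1 m : Mvar G m -> hA m <> 0 -> Evar G (psi m).
Proof.
move=> [sV [sW [comm _]]] hne.
have gu : forall x, gm m x \in unitmx.
  move=> x; rewrite unitmxE unitfE.
  by move/eqP/prodf_neq0: hne => /(_ x isT).
have fg : forall x, gm m x *m col_mx 1%:M 0 = fm m x.
  by move=> x; rewrite mul_block_col !mulmx1 !mulmx0 !addr0 vsubmxK.
have W'c : forall a, Wp m a *m col_mx 1%:M 0 = col_mx 1%:M 0 *m Vm m a.
  move=> a; rewrite /Wp -!mulmxA fg.
  have comm' : Wm m a *m fm m (src a) = fm m (tgt a) *m Vm m a := comm a.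
  rewrite comm' -[fm m (tgt a)]fg !mulmxA mulVmx // mul1mx.
  done.
have W'b : forall a, Wp m a = block_mx (Vm m a) (ursubmx (Wp m a)) 0 (drsubmx (Wp m a)).
  by move=> a; apply: block_dec.
have sW' : @satisfies k Q0 Q1 src tgt G D (Wp m).
  apply: (sat_morph (T := fun x => invmx (gm m x))) sW.
    by move=> a; rewrite /Wp -!mulmxA mulmxV // mulmx1.
  by move=> x; exists (gm m x); rewrite mulVmx.
have sB : @satisfies k Q0 Q1 src tgt G D
   (fun a => block_mx (Vm m a) (ursubmx (Wp m a)) 0 (drsubmx (Wp m a))).
  by apply: (sat_ext _ sW') => a; rewrite -W'b.
rewrite /Evar; split; [|split].
- by apply: (sat_ext _ (sat_dr sB)) => a; apply/matrixP => p q; rewrite mxofE.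
- by apply: (sat_ext _ sV) => a; apply/matrixP => p q; rewrite !mxofE.
- apply: (sat_ext _ sB) => a; congr block_mx; apply/matrixP => p q; by rewrite !mxofE.
Qed.

Definition mk (u : EI -> k) : MI -> k := fun j =>
  match j with
  | inl (inl j) => u (inl (inr j))
  | inl (inr j) => (block_mx (mxof (fun j => u (inl (inr j))) (projT1 j))
                             (mxof (fun j => u (inr j)) (projT1 j)) 0
                             (mxof (fun j => u (inl (inl j))) (projT1 j))) (projT2 j).1 (projT2 j).2
  | inr j => (col_mx 1%:M 0 : 'M[k]_(d (projT1 j) + e (projT1 j), d (projT1 j))) (projT2 j).1 (projT2 j).2
  end.

Lemma A2 u : Evar G u -> (Mvar G (mk u) /\ hA (mk u) <> 0) /\ forall j, psi (mk u) j = u j.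
Proof.
move=> [sU [sV sW]].
set Uu := mxof (fun j => u (inl (inl j))) in sU sW.
set Vu := mxof (fun j => u (inl (inr j))) in sV sW.
set Zu := mxof (fun j => u (inr j)) in sW.
have VE : forall a, Vm (mk u) a = Vu a by move=> a; apply/matrixP => p q; rewrite !mxofE.
have WE : forall a, Wm (mk u) a = block_mx (Vu a) (Zu a) 0 (Uu a).
  by move=> a; apply/matrixP => p q; rewrite !mxofE.
have fE : forall x, fm (mk u) x = col_mx 1%:M 0 by move=> x; apply/matrixP => p q; rewrite !mxofE.
have gE : forall x, gm (mk u) x = 1%:M.
  by move=> x; rewrite /gm fE col_mxKu col_mxKd -scalar_mx_block.
have WpE : forall a, Wp (mk u) a = block_mx (Vu a) (Zu a) 0 (Uu a).
  by move=> a; rewrite /Wp !gE invmx1 mul1mx mulmx1 WE.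
split; first split.
- rewrite /Mvar; split; [|split; [|split]].
  + by apply: (sat_ext _ sV) => a; rewrite -VE.
  + by apply: (sat_ext _ sW) => a; rewrite -WE.
  + move=> a; have := WE a; have := VE a; have := fE (src a); have := fE (tgt a).
    rewrite /Vm /Wm /fm => -> -> -> ->.
    by rewrite mul_block_col mul_col_mx !mulmx1 !mulmx0 mul1mx mul0mx !addr0.
  + move=> x u1 u2 /=; have := fE x; rewrite /fm => ->; exact: col10_inj.
- rewrite /hA (eq_bigr (fun _ => 1)) ?big1_eq; first by apply/eqP; exact: oner_neq0.
  by move=> x _; rewrite gE det1.
- case=> [[[a [p q]]|[a [p q]]]|[a [p q]]] //=.
  + by rewrite WpE block_mxKdr mxofE.
  + by rewrite WpE block_mxKur mxofE.
Qed.

Lemma A3 : zcont (fun m : MI -> k => Mvar G m /\ hA m <> 0) psi.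
Proof.
have pg : forall x, pmx (fun m : MI -> k => gm m x).
  move=> x; apply: pmx_block; [apply: pmx_usub|exact: pmx_const|apply: pmx_dsub|exact: pmx_const].
    rewrite /fm => i j; apply: (pf_eq (pf_coord _ (inr (existT _ x (i,j)) : MI))) => v; by rewrite mxE.
  rewrite /fm => i j; apply: (pf_eq (pf_coord _ (inr (existT _ x (i,j)) : MI))) => v; by rewrite mxE.
have pW : forall a, pmx (fun m : MI -> k => Wm m a) by move=> a; rewrite /Wm => i j; apply: (pf_eq (pf_coord _ (inl (inr (existT _ a (i,j))) : MI))) => v; rewrite mxE.
have gu : forall m, hA m <> 0 -> forall x, gm m x \in unitmx.
  move=> m hne x; rewrite unitmxE unitfE.
  by move/eqP/prodf_neq0: hne => /(_ x isT).
have WpE : forall m a, hA m <> 0 -> Wp m a = (\det (gm m (tgt a)))^-1 *: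
     (\adj (gm m (tgt a)) *m Wm m a *m gm m (src a)).
  by move=> m a hne; rewrite /Wp invmx_adj ?gu // -!scalemxAl.
apply: zcont_frac; case=> [[[a [p q]]|j]|[a [p q]]].
- exists (fun m => (\adj (gm m (tgt a)) *m Wm m a *m gm m (src a)) (rshift _ p) (rshift _ q)).
  exists (fun m => \det (gm m (tgt a))).
  split; first by apply: pmx_mul; [apply: pmx_mul; [apply: pmx_adj|]|].
  split; first exact: pf_det.
  move=> m [_ hne]; have du : \det (gm m (tgt a)) != 0 by rewrite -unitfE -unitmxE gu.
  split; first exact/eqP.
  by rewrite /= mxE mxE WpE // ent_frac.
- exists (fun m => m (inl (inl j))), (fun _ => 1).
  split; first exact: pf_coord.
  split; first exact: pf_const.
  by move=> m _; split; [apply/eqP; exact: oner_neq0|rewrite mulr1].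
- exists (fun m => (\adj (gm m (tgt a)) *m Wm m a *m gm m (src a)) (lshift _ p) (rshift _ q)).
  exists (fun m => \det (gm m (tgt a))).
  split; first by apply: pmx_mul; [apply: pmx_mul; [apply: pmx_adj|]|].
  split; first exact: pf_det.
  move=> m [_ hne]; have du : \det (gm m (tgt a)) != 0 by rewrite -unitfE -unitmxE gu.
  split; first exact/eqP.
  by rewrite /= mxE mxE WpE // ent_frac.
Qed.

Lemma dirA : irreducible (@Mvar k Q0 Q1 src tgt G d D) -> irreducible (@Evar k Q0 Q1 src tgt G e d).
Proof.
move=> Hirr.
have E0 : Evar G (fun _ : EI => 0).
  have z : forall (dd : Q0 -> nat) (c : midx (fun a => dd (tgt a)) (fun a => dd (src a)) -> k),
     (forall j, c j = 0) -> @satisfies k Q0 Q1 src tgt G dd (mxof c).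
    move=> dd c Hc; apply: (sat_ext _ (sat_zero src tgt dd hG)) => a.
    by apply/matrixP => p q; rewrite mxofE Hc mxE.
  rewrite /Evar; split; [exact: z|split; [exact: z|]].
  apply: (sat_ext _ (sat_zero src tgt D hG)) => a.
  by apply/matrixP => p q; rewrite -block_mx0; congr (block_mx _ _ _ _ p q); apply/matrixP => i j; rewrite !mxE.
apply: (irr_image (X := fun m : MI -> k => Mvar G m /\ hA m <> 0) (phi := psi)).
- apply: irr_open => //.
    apply: pf_prod => x; apply: pf_det.
    apply: pmx_block; [apply: pmx_usub|exact: pmx_const|apply: pmx_dsub|exact: pmx_const].
      rewrite /fm => i j; apply: (pf_eq (pf_coord _ (inr (existT _ x (i,j)) : MI))) => v; by rewrite mxE.
    rewrite /fm => i j; apply: (pf_eq (pf_coord _ (inr (existT _ x (i,j)) : MI))) => v; by rewrite mxE.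
  by have [[H1 H2] _] := A2 E0; exists (mk (fun _ => 0)).
- exact: A3.
- by move=> m [H1 H2]; apply: A1.
- by move=> u /A2 [H1 H2]; exists (mk u).
Qed.
End DirA.


Section DirB.
Variable k : closedFieldType.
Variables (Q0 Q1 : finType) (src tgt : Q1 -> Q0).
Variable G : seq (kQ k Q0 Q1).
Variables e d : Q0 -> nat.
Hypothesis He : forall x, (e x <= d x)%N.
Local Notation e' := (fun x => (d x - e x)%N).
Local Notation EI := (Eidx src tgt e' e).
Local Notation MI := (Midx src tgt e d).
Local Notation XI := (EI + midx d d)%type.

Definition Hx x : (e x + e' x)%N = d x := subnKC (He x).

Definition Ub (v : XI -> k) : Rep k src tgt e' := mxof (fun j => v (inl (inl (inl j)))).
Definition Vb (v : XI -> k) : Rep k src tgt e := mxof (fun j => v (inl (inl (inr j)))).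
Definition Zb (v : XI -> k) a : 'M[k]_(e (tgt a), e' (src a)) := mxof (fun j => v (inl (inr j))) a.
Definition W0 (v : XI -> k) a : 'M[k]_(e (tgt a) + e' (tgt a), e (src a) + e' (src a)) :=
  block_mx (Vb v a) (Zb v a) 0 (Ub v a).
Definition gb (v : XI -> k) x : 'M[k]_(d x) := mxof (fun j => v (inr j)) x.
Definition Tb (v : XI -> k) x : 'M[k]_(d x, e x + e' x) := castmx (erefl, esym (Hx x)) (gb v x).
Definition Sb (v : XI -> k) x : 'M[k]_(e x + e' x, d x) := castmx (esym (Hx x), erefl) (invmx (gb v x)).
Definition Wb (v : XI -> k) a : 'M[k]_(d (tgt a), d (src a)) := Tb v (tgt a) *m W0 v a *m Sb v (src a).
Definition fb (v : XI -> k) x : 'M[k]_(d x, e x) := gb v x *m pid_mx (e x).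
Definition hB (w : midx d d -> k) := \prod_x \det (mxof w x).
Definition XB (v : XI -> k) := Evar G (fun j => v (inl j)) /\ (True /\ hB (fun j => v (inr j)) <> 0).
Definition phi (v : XI -> k) : MI -> k := fun j =>
  match j with
  | inl (inl j) => v (inl (inl (inr j)))
  | inl (inr j) => Wb v (projT1 j) (projT2 j).1 (projT2 j).2
  | inr j => fb v (projT1 j) (projT2 j).1 (projT2 j).2
  end.

Lemma B1 v : XB v -> Mvar G (phi v).
Proof.
move=> [[sU [sV sW]] [_ hne]].
have gu : forall x, gb v x \in unitmx.
  move=> x; rewrite unitmxE unitfE.
  by move/eqP/prodf_neq0: hne => /(_ x isT).
have TS : forall x, Tb v x *m Sb v x = 1%:M by move=> x; rewrite cast_mul1 mulmxV.
have ST : forall x, Sb v x *m Tb v x = 1%:M by move=> x; apply: cast_mul2; rewrite mulVmx.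
have W0c : forall a, W0 v a *m col_mx 1%:M 0 = col_mx 1%:M 0 *m Vb v a.
  by move=> a; rewrite mul_block_col mul_col_mx !mulmx1 !mulmx0 mul1mx mul0mx !addr0.
have fT : forall x, fb v x = Tb v x *m col_mx 1%:M 0 by move=> x; rewrite /Tb cast_pid.
have sWb : @satisfies k Q0 Q1 src tgt G d (Wb v).
  apply: (sat_morph (T := Tb v)) (_ : @satisfies k Q0 Q1 src tgt G (fun x => (e x + e' x)%N) (W0 v)).
  - by move=> a; rewrite /Wb -!mulmxA ST mulmx1.
  - by move=> x; exists (Sb v x).
  - exact: sW.
have WbE : forall a, mxof (fun j => phi v (inl (inr j))) a = Wb v a.
  by move=> a; apply/matrixP => p q; rewrite mxofE.
have fbE : forall x, mxof (fun j => phi v (inr j)) x = fb v x.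
  by move=> x; apply/matrixP => p q; rewrite mxofE.
rewrite /Mvar; split; [|split; [|split]].
- by apply: (sat_ext _ sV) => a; apply/matrixP => p q; rewrite !mxofE.
- by apply: (sat_ext _ sWb) => a; rewrite WbE.
- move=> a; rewrite WbE !fbE.
  have VE : mxof (fun j => phi v (inl (inl j))) a = Vb v a.
    by apply/matrixP => p q; rewrite !mxofE.
  rewrite VE /Wb !fT -!mulmxA (mulmxA (Sb v (src a))) ST mul1mx W0c.
  done.
- move=> x u1 u2 /=; rewrite !fbE !fT -!mulmxA => E.
  apply: col10_inj; have := congr1 (mulmx (Sb v x)) E.
  by rewrite !mulmxA ST !mul1mx; apply.
Qed.

Lemma B2 m : Mvar G m -> exists v, XB v /\ forall j, phi v j = m j.
Proof.
move=> [sV [sW [comm inj]]].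
set Vm := mxof (fun j => m (inl (inl j))) in sV comm.
set Wm := mxof (fun j => m (inl (inr j))) in sW comm.
set fm := mxof (fun j => m (inr j)) in comm inj.
have gex : forall x, exists g : 'M[k]_(d x), g \in unitmx /\ g *m pid_mx (e x) = fm x.
  by move=> x; apply: complete; apply: inj.
pose gg x := proj1_sig (constructive_indefinite_description _ (gex x)).
have ggP : forall x, gg x \in unitmx /\ gg x *m pid_mx (e x) = fm x.
  by move=> x; rewrite /gg; case: constructive_indefinite_description.
pose T' x := castmx (erefl, esym (Hx x)) (gg x) : 'M[k]_(d x, e x + e' x).
pose S' x := castmx (esym (Hx x), erefl) (invmx (gg x)) : 'M[k]_(e x + e' x, d x).
have TS : forall x, T' x *m S' x = 1%:M by move=> x; rewrite cast_mul1 mulmxV //; case: (ggP x).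
have ST : forall x, S' x *m T' x = 1%:M by move=> x; apply: cast_mul2; rewrite mulVmx //; case: (ggP x).
have fT : forall x, fm x = T' x *m col_mx 1%:M 0 by move=> x; rewrite cast_pid; case: (ggP x).
pose W0' a := S' (tgt a) *m Wm a *m T' (src a).
have W0c : forall a, W0' a *m col_mx 1%:M 0 = col_mx 1%:M 0 *m Vm a.
  move=> a; rewrite /W0' -!mulmxA -fT comm (fT (tgt a)) !mulmxA ST mul1mx //.
have W0b : forall a, W0' a = block_mx (Vm a) (ursubmx (W0' a)) 0 (drsubmx (W0' a)).
  by move=> a; apply: block_dec.
have sW0 : @satisfies k Q0 Q1 src tgt G (fun x => (e x + e' x)%N) W0'.
  apply: (sat_morph (T := S')) sW.
    by move=> a; rewrite /W0' -!mulmxA TS mulmx1.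
  by move=> x; exists (T' x).
pose v : XI -> k := fun j =>
  match j with
  | inl (inl (inl j)) => drsubmx (W0' (projT1 j)) (projT2 j).1 (projT2 j).2
  | inl (inl (inr j)) => m (inl (inl j))
  | inl (inr j) => ursubmx (W0' (projT1 j)) (projT2 j).1 (projT2 j).2
  | inr j => gg (projT1 j) (projT2 j).1 (projT2 j).2
  end.
have gbE : forall x, gb v x = gg x by move=> x; apply/matrixP => p q; rewrite mxofE.
have W0E : forall a, W0 v a = W0' a.
  move=> a; rewrite [RHS]W0b /W0; congr block_mx; apply/matrixP => p q; by rewrite mxofE.
exists v; split.
  split; last split => //.
    rewrite /Evar; split; [|split].
    - have sB : @satisfies k Q0 Q1 src tgt G (fun x => (e x + e' x)%N)
         (fun a => block_mx (Vm a) (ursubmx (W0' a)) 0 (drsubmx (W0' a))).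
        by apply: (sat_ext _ sW0) => a; rewrite -W0b.
      by apply: (sat_ext _ (sat_dr sB)) => a; apply/matrixP => p q; rewrite mxofE.
    - by apply: (sat_ext _ sV) => a; apply/matrixP => p q; rewrite !mxofE.
    - apply: (sat_ext _ sW0) => a; rewrite -W0E.
      by congr block_mx; apply/matrixP => p q; rewrite !mxofE.
  rewrite /hB; apply/eqP/prodf_neq0 => x _.
  have := gbE x; rewrite /gb => ->; rewrite -unitfE -unitmxE; by case: (ggP x).
case=> [[[a [p q]]|[a [p q]]]|[x [p q]]] //=.
- rewrite /Wb W0E /Tb /Sb !gbE -/(T' _) -/(S' _) /W0' !mulmxA TS mul1mx -mulmxA TS mulmx1.
  by rewrite mxofE.
- rewrite /fb gbE; case: (ggP x) => _ ->; by rewrite mxofE.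
Qed.

Lemma B3 : zcont XB phi.
Proof.
have pg : forall x, pmx (fun v : XI -> k => gb v x).
  by move=> x; rewrite /gb => i j; apply: (pf_eq (pf_coord _ (inr (existT _ x (i,j)) : XI))) => v; rewrite mxE.
have pW0 : forall a, pmx (fun v : XI -> k => W0 v a).
  move=> a; apply: pmx_block; [| |exact: pmx_const|].
  - by rewrite /Vb => i j; apply: (pf_eq (pf_coord _ (inl (inl (inr (existT _ a (i,j)))) : XI))) => v; rewrite mxE.
  - by rewrite /Zb => i j; apply: (pf_eq (pf_coord _ (inl (inr (existT _ a (i,j))) : XI))) => v; rewrite mxE.
  - by rewrite /Ub => i j; apply: (pf_eq (pf_coord _ (inl (inl (inl (existT _ a (i,j)))) : XI))) => v; rewrite mxE.
have gu : forall v, XB v -> forall x, gb v x \in unitmx.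
  move=> v [_ [_ hne]] x; rewrite unitmxE unitfE.
  by move/eqP/prodf_neq0: hne => /(_ x isT).
have WbE : forall v a, XB v -> Wb v a = (\det (gb v (src a)))^-1 *:
     (Tb v (tgt a) *m W0 v a *m castmx (esym (Hx (src a)), erefl) (\adj (gb v (src a)))).
  by move=> v a Xv; rewrite /Wb /Sb invmx_adj ?gu // castmx_scale -!scalemxAr.
apply: zcont_frac; case=> [[j|[a [p q]]]|[x [p q]]].
- exists (fun v => v (inl (inl (inr j)))), (fun _ => 1).
  split; first exact: pf_coord.
  split; first exact: pf_const.
  by move=> v _; split; [apply/eqP; exact: oner_neq0|rewrite mulr1].
- exists (fun v => (Tb v (tgt a) *m W0 v a *m castmx (esym (Hx (src a)), erefl) (\adj (gb v (src a)))) p q).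
  exists (fun v => \det (gb v (src a))).
  split.
    apply: pmx_mul; [apply: pmx_mul; [apply: pmx_cast|]|apply: pmx_cast; apply: pmx_adj] => //.
  split; first exact: pf_det.
  move=> v Xv; have du : \det (gb v (src a)) != 0 by rewrite -unitfE -unitmxE gu.
  split; first exact/eqP.
  by rewrite /= WbE // ent_frac.
- exists (fun v => fb v x p q), (fun _ => 1).
  split; first by apply: pmx_mul => //; exact: pmx_const.
  split; first exact: pf_const.
  by move=> v _; split; [apply/eqP; exact: oner_neq0|rewrite mulr1].
Qed.

Lemma dirB : irreducible (@Evar k Q0 Q1 src tgt G e' e) -> irreducible (@Mvar k Q0 Q1 src tgt G e d).
Proof.
move=> Hirr.
apply: (irr_image (X := XB) (phi := phi)); last 2 first.
- by move=> v Xv; apply: B1.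
- exact: B2.
- apply: (irr_prod (X := fun u => Evar G u) (Y := fun w => True /\ hB w <> 0)) => //.
  apply: irr_open; first exact: irr_full.
    rewrite /hB; apply: pf_prod => x; apply: pf_det => i j.
    by apply: (pf_eq (pf_coord _ (existT _ x (i,j)))) => v; rewrite mxE.
  exists (fun j => (1%:M : 'M[k]_(d (projT1 j))) (projT2 j).1 (projT2 j).2); split => //.
  rewrite /hB (eq_bigr (fun _ => 1)) ?big1_eq; first by apply/eqP; exact: oner_neq0.
  move=> x _; rewrite -[RHS](@det1 _ (d x)); congr (\det _).
  by apply/matrixP => p q; rewrite mxofE.
- exact: B3.
Qed.
End DirB.

Unset Implicit Arguments.

Theorem proposition3p2 (k : closedFieldType) (Q0 Q1 : finType)
  (src tgt : Q1 -> Q0) (G : seq (kQ k Q0 Q1)) :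
  admissible src tgt G ->
  (ext_irreducible src tgt G <-> mono_irreducible src tgt G).
Proof.
move=> [hG _]; split.
- move=> Hext e d Hed.
  apply: (dirB Hed).
  exact: (Hext (fun x => (d x - e x)%N) e).
- move=> Hmono e d.
  apply: (dirA hG).
  by apply: Hmono => x; exact: leq_addr.
Qed.
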